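(* For every integer $k\ge 4$, the order $TW_k$ has questionable-width at least $3k-8$.
   Context: For an integer $k\ge3$, $TW_k$ is the order on the elements $t_0,\dots,t_{k-1}$ together with one element $w_{a,b}$ for each pair of integers $0\le a$, $b\le k-1$ with $b\ge a+2$, whose order relation is: $t_j<t_l$ iff $j<l$; $t_j<w_{a,b}$ iff $j\le a$; $w_{a,b}<t_j$ iff $j\ge b$; $w_{a,b}<w_{c,d}$ iff $b\le c$; all other pairs are incomparable. For an ordinal $j$, $\mathcal O_j=(O_k)_{k<j}$ is a sequence of orders; a word of length $\ell\le j$ is $(x_k)_{k<\ell}$ with $x_k\in\mathrm{Dom}(O_k)$. The question of words $X,Y$ is $(k,x_k,y_k)$ for the least $k<\min(\mathrm{len}X,\mathrm{len}Y)$ with $x_k\ne y_k$, if it exists. For $i<j$, $\mathrm{Next}(i,j,\mathcal O_j)$ is the partial order on words of length $\ell$, $i\le\ell<j$, with $X<Y$ iff their question exists and $x_k<y_k$ in $O_k$; otherwise incomparable. A questionable representation of an order $O$ is an injective $f$ into some $\mathrm{Next}(i,j,\mathcal O_j)$ with $f(x)<f(y)\iff x<y$; its width is the supremum of the cardinalities of the $\mathrm{Dom}(O_k)$. The questionable-width of $O$ is the minimum width of a questionable representation of $O$. *)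

(* Defs.v *)
From mathcomp Require Import all_boot.
Set Implicit Arguments. Unset Strict Implicit. Unset Printing Implicit Defensive.

(* Elements: t_j (j < k) and w_{a,b} (a, b < k, a + 2 <= b). *)
Definition TWel (k : nat) : Type :=
  ('I_k + {p : 'I_k * 'I_k | (p.1 : nat).+2 <= p.2})%type.

Definition tw_t {k} (j : 'I_k) : TWel k := inl j.

Definition tw_lt (k : nat) (x y : TWel k) : bool :=
  match x, y with
  | inl j, inl l => (j : nat) < l
  | inl j, inr w => (j : nat) <= (sval w).1
  | inr w, inl j => (sval w).2 <= (j : nat)
  | inr w, inr w' => (sval w).2 <= (sval w').1
  end.

(* An ordinal j is represented by a type J with a strict well-order ltJ:
   the elements of J are the ordinals < j.  A word of length l (l an element
   of J, i.e. an ordinal < j) is given by l together with a total letter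
   function x : forall q, D q, of which only the letters x q with q < l matter. *)

Definition strict_wellorder (J : Type) (lt : J -> J -> Prop) : Prop :=
  (forall x, ~ lt x x) /\
  (forall x y z, lt x y -> lt y z -> lt x z) /\
  (forall x y, x = y \/ lt x y \/ lt y x) /\
  well_founded lt.

Definition strict_porder (T : Type) (R : T -> T -> Prop) : Prop :=
  (forall x, ~ R x x) /\ (forall x y z, R x y -> R y z -> R x z).

Definition word_eq (J : Type) (lt : J -> J -> Prop) (D : J -> Type)
  (l1 : J) (x : forall q, D q) (l2 : J) (y : forall q, D q) : Prop :=
  l1 = l2 /\ (forall q, lt q l1 -> x q = y q).

Definition next_lt (J : Type) (lt : J -> J -> Prop) (D : J -> Type)
  (O : forall q, D q -> D q -> Prop)
  (l1 : J) (x : forall q, D q) (l2 : J) (y : forall q, D q) : Prop :=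
  exists q, [/\ lt q l1, lt q l2, x q <> y q,
              (forall p, lt p q -> x p = y p) & O q (x q) (y q)].

Definition questionable_rep (X : Type) (R : X -> X -> Prop)
  (J : Type) (lt : J -> J -> Prop) (D : J -> Type)
  (O : forall q, D q -> D q -> Prop) (i : J)
  (len : X -> J) (wrd : X -> forall q, D q) : Prop :=
  [/\ (forall a, ~ lt (len a) i),
      (forall a b, word_eq lt (len a) (wrd a) (len b) (wrd b) -> a = b) &
      (forall a b, R a b <-> next_lt lt O (len a) (wrd a) (len b) (wrd b))].

(* width >= n : sup_q |D q| >= n, i.e. some D q has at least n elements *)
Definition width_ge (J : Type) (D : J -> Type) (n : nat) : Prop :=
  exists q : J, exists f : 'I_n -> D q, injective f.

(* Main.v *)
Require Import Defs.
From mathcomp Require Import all_boot.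
From mathcomp Require Import zify.
From Stdlib Require Import Classical.

Definition w0 (n:nat) : {p : 'I_n.+4 * 'I_n.+4 | (p.1 : nat).+2 <= p.2}.
Proof. exists (ord0, inord 2). by rewrite /= inordK. Defined.

Definition mk_w n a b : TWel n.+4 := inr (insubd (w0 n) (inord a, inord b)).

Lemma mk_wK n a b : a.+2 <= b -> b < n.+4 ->
  sval (insubd (w0 n) (inord a, inord b)) = (inord a, inord b).
Proof. move=> h1 h2. apply: insubdK. rewrite unfold_in /= !inordK; lia. Qed.

Inductive sidx := ST of nat | SL of nat | SU of nat.

Definition valid (n : nat) (s : sidx) : bool :=
  match s with
  | ST j => (1 <= j) && (j <= n.+2)
  | SL b => (2 <= b) && (b <= n.+2)
  | SU a => (1 <= a) && (a <= n.+1)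
  end.

Definition emb n (s : sidx) : TWel n.+4 :=
  match s with
  | ST j => inl (inord j)
  | SL b => mk_w n 0 b
  | SU a => mk_w n a n.+3
  end.

Definition relN (s s' : sidx) : bool :=
  match s, s' with
  | ST i, ST j => i < j
  | ST j, SL b => false
  | ST j, SU a => j <= a
  | SL b, ST j => b <= j
  | SL b, SL c => false
  | SL b, SU a => b <= a
  | SU a, _ => false
  end.

Lemma rel_emb n s s' : valid n s -> valid n s' ->
  tw_lt (emb n s) (emb n s') = relN s s'.
Proof.
case: s => [j|b|a]; case: s' => [j'|b'|a'] /= h h';
  rewrite /tw_lt /mk_w ?mk_wK /= ?inordK //; lia.
Qed.

Lemma wf_min (J : Type) (lt : J -> J -> Prop) (wf : well_founded lt)
  (P : J -> Prop) : (exists q, P q) ->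
  exists q, P q /\ forall p, lt p q -> ~ P p.
Proof.
move=> [q Pq]; move: q Pq.
apply: (well_founded_ind wf (fun q => P q -> exists q0, P q0 /\ forall p, lt p q0 -> ~ P p)).
move=> q IH Pq.
case: (classic (exists p, lt p q /\ P p)) => [[p [lpq Pp]]|nex].
  exact: IH p lpq Pp.
exists q; split=> // p lpq Pp; apply: nex; by exists p.
Qed.

Lemma comb n (sm : sidx -> sidx -> Prop)
  (srefl : forall x, sm x x)
  (ssym : forall x y, sm x y -> sm y x)
  (strans : forall x y z, sm x y -> sm y z -> sm x z)
  (dist : forall x x' z, valid n x -> valid n x' -> valid n z -> sm x x' ->
     (relN z x <> relN z x') \/ (relN x z <> relN x' z) -> sm z x) :
  forall x x', valid n x -> valid n x' -> x <> x' -> sm x x' ->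
  forall s, valid n s -> sm s x.
Proof.
have d1 : forall x x' z, valid n x -> valid n x' -> valid n z -> sm x x' ->
   relN z x -> ~~ relN z x' -> sm z x.
  move=> x x' z vx vx' vz s h1 h2; apply: (dist x x' z vx vx' vz s); left.
  by move: h1 h2; case: (relN z x); case: (relN z x').
have d2 : forall x x' z, valid n x -> valid n x' -> valid n z -> sm x x' ->
   ~~ relN z x -> relN z x' -> sm z x.
  move=> x x' z vx vx' vz s h1 h2; apply: (dist x x' z vx vx' vz s); left.
  by move: h1 h2; case: (relN z x); case: (relN z x').
have d3 : forall x x' z, valid n x -> valid n x' -> valid n z -> sm x x' ->
   relN x z -> ~~ relN x' z -> sm z x.
  move=> x x' z vx vx' vz s h1 h2; apply: (dist x x' z vx vx' vz s); right.
  by move: h1 h2; case: (relN x z); case: (relN x' z).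
have d4 : forall x x' z, valid n x -> valid n x' -> valid n z -> sm x x' ->
   ~~ relN x z -> relN x' z -> sm z x.
  move=> x x' z vx vx' vz s h1 h2; apply: (dist x x' z vx vx' vz s); right.
  by move: h1 h2; case: (relN x z); case: (relN x' z).
have allT : forall i j, 1 <= i -> i < j -> j <= n.+2 -> sm (ST i) (ST j) ->
    forall s, valid n s -> sm s (ST i).
  move=> i j hi hij hj sij.
  have hT : forall l, 1 <= l -> l <= n.+2 -> sm (ST l) (ST i).
    move=> l hl1 hl2.
    case: (ltngtP l i) => [li|il|->]; last exact: srefl.
    - have hLi : sm (SL j) (ST i).
        apply: (d2 (ST i) (ST j) (SL j)) => //=; lia.
      apply: (d1 (ST i) (SL j) (ST l)) => //=; try lia; exact: ssym.
    - case: (ltngtP l j) => [lj|jl|->]; last exact: ssym.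
      + apply: (d3 (ST i) (ST j) (ST l)) => //=; lia.
      + have hU : sm (SU i) (ST j).
          apply: (d4 (ST j) (ST i) (SU i)) => //=; try lia; exact: ssym.
        apply: (strans _ (ST j)); last exact: ssym sij.
        apply: (d3 (ST j) (SU i) (ST l)) => //=; try lia; exact: ssym.
  case=> [l|b|a] /= vs; first by apply: hT; lia.
  - have s1 : sm (ST (b - 1)) (ST b).
      apply: (strans _ (ST i)); [apply: hT | apply: ssym; apply: hT]; lia.
    apply: strans (hT (b - 1) _ _); try lia.
    apply: (d2 (ST (b - 1)) (ST b) (SL b)) => //=; lia.
  - have s1 : sm (ST a) (ST a.+1).
      apply: (strans _ (ST i)); [apply: hT | apply: ssym; apply: hT]; lia.
    apply: strans (hT a _ _); try lia.
    apply: (d3 (ST a) (ST a.+1) (SU a)) => //=; lia.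
have twoT : forall j x, 1 <= j -> j <= n.+2 -> valid n x -> x <> ST j ->
    sm (ST j) x -> exists i, [/\ 1 <= i, i <= n.+2, i != j & sm (ST i) (ST j)].
  move=> j [i|b|a] hj1 hj2 /= vx nx sx.
  - exists i; split; try lia.
      by apply/eqP => e; apply: nx; rewrite e.
    exact: ssym.
  - case: (eqVneq j (b - 1)) => [e|ne].
    + have hU : sm (SU j) (ST j).
        apply: (d3 (ST j) (SL b) (SU j)) => //=; lia.
      exists j.+1; split; try lia.
      apply: (d3 (ST j) (SU j) (ST j.+1)) => //=; try lia; exact: ssym.
    + exists (b - 1); split; try lia.
      case: (ltngtP j (b - 1)) => [l|l|l].
      * apply: (d3 (ST j) (SL b) (ST (b - 1))) => //=; lia.
      * apply: (d1 (ST j) (SL b) (ST (b - 1))) => //=; lia.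
      * by rewrite l eqxx in ne.
  - case: (eqVneq j a.+1) => [e|ne].
    + have hL : sm (SL j) (ST j).
        apply: (d1 (ST j) (SU a) (SL j)) => //=; lia.
      exists a; split; try lia.
      apply: (d1 (ST j) (SL j) (ST a)) => //=; try lia; exact: ssym.
    + exists a.+1; split; try lia.
      case: (ltngtP j a.+1) => [l|l|l].
      * apply: (d3 (ST j) (SU a) (ST a.+1)) => //=; lia.
      * apply: (d1 (ST j) (SU a) (ST a.+1)) => //=; lia.
      * by rewrite l eqxx in ne.
have someT : forall x x', valid n x -> valid n x' -> x <> x' -> sm x x' ->
    exists j, [/\ 1 <= j, j <= n.+2 & sm (ST j) x].
  case=> [j|b|a]; case=> [j'|b'|a'] /= vx vx' nx sx.
  all: try (exists j; split; [lia|lia|exact: srefl]).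
  all: try (exists j'; split; [lia|lia|exact: ssym]).
  - case: (ltngtP b b') => [l|l|l].
    + exists b; split; try lia.
      apply: (d3 (SL b) (SL b') (ST b)) => //=; lia.
    + exists b'; split; try lia.
      apply: (d4 (SL b) (SL b') (ST b')) => //=; lia.
    + by case: nx; rewrite l.
  - exists b; split; try lia.
    apply: (d3 (SL b) (SU a') (ST b)) => //=; lia.
  - exists b'; split; try lia.
    apply: (d4 (SU a) (SL b') (ST b')) => //=; lia.
  - case: (ltngtP a a') => [l|l|l].
    + exists a'; split; try lia.
      apply: (d2 (SU a) (SU a') (ST a')) => //=; lia.
    + exists a; split; try lia.
      apply: (d1 (SU a) (SU a') (ST a)) => //=; lia.
    + by case: nx; rewrite l.
move=> x x' vx vx' nxx sxx'.
have [j [hj1 hj2 sjx]] := someT x x' vx vx' nxx sxx'.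
have [y [vy ny sjy]] : exists y, [/\ valid n y, y <> ST j & sm (ST j) y].
  case: (classic (x = ST j)) => [e|ne].
    exists x'; split => //; first by move=> e'; apply: nxx; rewrite e e'.
    exact: (strans _ _ _ sjx sxx').
  by exists x.
have [i [hi1 hi2 nij sij]] := twoT j y hj1 hj2 vy ny sjy.
move=> s vs.
case: (ltngtP i j) => [l|l|l].
- exact: (strans _ _ _ (allT i j hi1 l hj2 sij s vs) (strans _ _ _ sij sjx)).
- have h := allT j i hj1 l hi2 (ssym _ _ sij) s vs. exact: (strans _ _ _ h sjx).
- by rewrite l eqxx in nij.
Qed.

Definition gidx n (i : nat) : sidx :=
  if i < n.+2 then ST i.+1 else if i < (2 * n + 3) then SL (i - n)
  else SU (i - (2 * n + 2)).

Lemma gidx_valid n i : i < 3 * n + 4 -> valid n (gidx n i).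
Proof.
rewrite /gidx => h; case: ifP => h1 /=; first lia.
case: ifP => h2 /=; lia.
Qed.

Lemma gidx_inj n i i' : i < 3 * n + 4 -> i' < 3 * n + 4 -> gidx n i = gidx n i' -> i = i'.
Proof.
rewrite /gidx => h h'.
case: ifP => h1; case: ifP => h1'; try case: ifP => h2; try case: ifP => h2';
  move=> e; try discriminate e; case: e; lia.
Qed.

Theorem lemma7p3 (k : nat) (hk : 4 <= k)
  (J : Type) (ltJ : J -> J -> Prop) (hJ : strict_wellorder ltJ)
  (D : J -> Type) (O : forall q, D q -> D q -> Prop)
  (hO : forall q, strict_porder (O q))
  (i : J) (len : TWel k -> J) (wrd : TWel k -> forall q, D q)
  (hrep : questionable_rep (fun x y => tw_lt x y) ltJ O i len wrd) :
  width_ge D (3 * k - 8).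
Proof.
destruct k as [|[|[|[|n]]]]; try by [].
move: hJ hrep => [irr [trans [tot wf]]] [hi hinj hrel].
pose E := emb n.
have Hrel : forall s s', valid n s -> valid n s' -> (relN s s' <->
    next_lt ltJ O (len (E s)) (wrd (E s)) (len (E s')) (wrd (E s'))).
  by move=> s s' vs vs'; rewrite -(rel_emb n s s' vs vs'); apply: hrel.
pose P q := exists s s', [/\ valid n s, valid n s' &
   ~ (ltJ q (len (E s)) /\ ltJ q (len (E s')) /\ wrd (E s) q = wrd (E s') q)].
have P_ex : exists q, P q.
  have [q [h1 h2 h3 _ _]] :
     next_lt ltJ O (len (E (ST 1))) (wrd (E (ST 1))) (len (E (ST 2))) (wrd (E (ST 2))).
    by apply/(Hrel (ST 1) (ST 2)).
  exists q, (ST 1), (ST 2); split => // [[_ [_ e]]]; exact: h3 e.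
have [q0 [Pq0 minq0]] := wf_min _ _ wf P P_ex.
have agree : forall p, ltJ p q0 -> forall s s', valid n s -> valid n s' ->
    ltJ p (len (E s)) /\ ltJ p (len (E s')) /\ wrd (E s) p = wrd (E s') p.
  move=> p lp s s' vs vs'; apply: NNPP => H; apply: (minq0 p lp); by exists s, s'.
have partner : forall s, valid n s -> exists s', valid n s' /\ (relN s s' \/ relN s' s).
  case=> [j|b|a] /= vs.
  - case: (eqVneq j 1) => [e|ne].
      exists (ST 2); split; [simpl; lia| left; rewrite e //].
    exists (ST 1); split; [simpl; lia| right; simpl; lia].
  - exists (ST n.+2); split; [simpl; lia | left; simpl; lia].
  - exists (ST 1); split; [simpl; lia | right; simpl; lia].
have F1 : forall s, valid n s -> ltJ q0 (len (E s)).
  move=> s vs; case: (tot q0 (len (E s))) => [e|[//|lt]].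
  - have [s' [vs' [r|r]]] := partner s vs.
    + have [q [l1 l2 ne _ _]] := (Hrel s s' vs vs').1 r.
      rewrite -e in l1.
      by exfalso; apply: ne; have [_ [_ ->]] := agree q l1 s s' vs vs'.
    + have [q [l1 l2 ne _ _]] := (Hrel s' s vs' vs).1 r.
      rewrite -e in l2.
      by exfalso; apply: ne; have [_ [_ ->]] := agree q l2 s' s vs' vs.
  - by have [h _] := agree _ lt s s vs vs; case: (irr _ h).
have F2 : forall p, ltJ p q0 -> forall s s', valid n s -> valid n s' ->
    wrd (E s) p = wrd (E s') p.
  by move=> p lp s s' vs vs'; have [_ [_ ->]] := agree p lp s s' vs vs'.
have F3 : exists s s', [/\ valid n s, valid n s' & wrd (E s) q0 <> wrd (E s') q0].
  have [s [s' [vs vs' H]]] := Pq0.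
  exists s, s'; split => // e; apply: H; split; [exact: F1|split; [exact: F1|exact: e]].
have modl : forall z x, valid n z -> valid n x -> wrd (E z) q0 <> wrd (E x) q0 ->
    (relN z x <-> O q0 (wrd (E z) q0) (wrd (E x) q0)).
  move=> z x vz vx nzx; split.
  - move/(Hrel _ _ vz vx) => [q [lz lx ne ag o]].
    case: (tot q q0) => [e|[l|l]].
    + by subst.
    + by exfalso; apply: ne; exact: F2 q l z x vz vx.
    + by exfalso; apply: nzx; apply: ag.
  - move=> o; apply/(Hrel _ _ vz vx); exists q0; split => //; try exact: F1.
    by move=> p lp; exact: F2.
pose sm s s' := wrd (E s) q0 = wrd (E s') q0.
have dist : forall x x' z, valid n x -> valid n x' -> valid n z -> sm x x' ->
     (relN z x <> relN z x') \/ (relN x z <> relN x' z) -> sm z x.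
  move=> x x' z vx vx' vz sxx' H; apply: NNPP => nzx.
  have nzx' : ~ sm z x' by rewrite /sm -sxx'.
  have nxz : wrd (E x) q0 <> wrd (E z) q0 by move=> e; apply: nzx; rewrite /sm e.
  have nxz' : wrd (E x') q0 <> wrd (E z) q0 by move=> e; apply: nzx'; rewrite /sm e.
  have e1 : relN z x = relN z x'.
    apply/idP/idP => h.
    - apply: (modl z x' vz vx' nzx').2; rewrite -sxx'; exact: (modl z x vz vx nzx).1.
    - apply: (modl z x vz vx nzx).2; rewrite sxx'; exact: (modl z x' vz vx' nzx').1.
  have e2 : relN x z = relN x' z.
    apply/idP/idP => h.
    - apply: (modl x' z vx' vz nxz').2; rewrite -sxx'; exact: (modl x z vx vz nxz).1.
    - apply: (modl x z vx vz nxz).2; rewrite sxx'; exact: (modl x' z vx' vz nxz').1.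
  by case: H.
have allsm := comb n sm (fun x => erefl) (fun x y e => esym e)
   (fun x y z e1 e2 => etrans e1 e2) dist.
have -> : 3 * n.+4 - 8 = 3 * n + 4 by lia.
exists q0, (fun m : 'I_(3 * n + 4) => wrd (E (gidx n m)) q0).
move=> m m' e; apply: val_inj => /=.
apply: (gidx_inj n _ _ (ltn_ord m) (ltn_ord m')).
apply: NNPP => ne.
have [s [s' [vs vs' ns]]] := F3.
have h1 := allsm _ _ (gidx_valid n _ (ltn_ord m)) (gidx_valid n _ (ltn_ord m')) ne e.
apply: ns; rewrite (h1 s vs) (h1 s' vs') //.
Qed.
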